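(* Let $d \ge 1$ be an integer, let $X_0, X_1, \dots$ be independent random variables each taking the value $1$ with probability $1/4$ and $0$ with probability $3/4$, and let $$P_d = P\Big(\exists N > 0 : \sum_{k=0}^{N-1} X_k < \tfrac{N}{d}\Big).$$ If $d \le 4$ then $P_d = 1$. If $d > 4$ then the polynomial $g_d(z) = z^d - 4z + 3$ has exactly one root in the open unit disk, this root is real and lies in $(3/4,1)$, and $P_d$ equals this root. *)

(* Defs.v *)
From Stdlib Require Import Reals List.
Import ListNotations.
Open Scope R_scope.

Definition Cx : Type := (R * R)%type.
Definition Cadd (z w : Cx) : Cx := (fst z + fst w, snd z + snd w).
Definition Cmul (z w : Cx) : Cx :=
  (fst z * fst w - snd z * snd w, fst z * snd w + snd z * fst w).
Definition Cof (x : R) : Cx := (x, 0).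
Fixpoint Cpow (z : Cx) (n : nat) : Cx :=
  match n with O => Cof 1 | S m => Cmul z (Cpow z m) end.
Definition Cnorm2 (z : Cx) : R := fst z * fst z + snd z * snd z.

Definition g (d : nat) (z : Cx) : Cx :=
  Cadd (Cadd (Cpow z d) (Cmul (Cof (-4)) z)) (Cof 3).

(* ---------- The probability P_d ----------
   X_0, X_1, ... i.i.d. with P(X_k = 1) = 1/4, P(X_k = 0) = 3/4.
   A realisation of (X_0,...,X_{M-1}) is a list of booleans (true = 1). *)

Fixpoint all_seqs (M : nat) : list (list bool) :=
  match M with
  | O => [[]]
  | S m => map (cons true) (all_seqs m) ++ map (cons false) (all_seqs m)
  end.

Fixpoint weight (l : list bool) : R :=
  match l with
  | [] => 1
  | b :: t => (if b then 1/4 else 3/4) * weight t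
  end.

Definition partial_sum (l : list bool) (N : nat) : nat :=
  count_occ Bool.bool_dec (firstn N l) true.

Definition event_upto (d : nat) (l : list bool) : bool :=
  existsb (fun N => if Rlt_dec (INR (partial_sum l N)) (INR N / INR d)
                    then true else false)
          (seq 1 (length l)).

Definition P_upto (d M : nat) : R :=
  fold_right Rplus 0
    (map (fun l => if event_upto d l then weight l else 0) (all_seqs M)).

(* P_d = P(exists N > 0, ...) = lim_{M -> oo} P_upto d M
   (continuity from below of the product measure). We phrase
   "P_d = p" as convergence of P_upto d to p. *)
Definition P_d_is (d : nat) (p : R) : Prop := Un_cv (P_upto d) p.

(* Main.v *)
Require Import Defs.
From Stdlib Require Import Reals.
From Stdlib Require Import Lra Lia List ZArith.
From Coquelicot Require Coquelicot.
Import ListNotations.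
Open Scope R_scope.

Fixpoint U (n : nat) (x : R) : R :=
  match n with O => 0 | S m => 1 + x * U m x end.

Lemma U_pow n x : x ^ n - 1 = (x - 1) * U n x.
Proof. induction n; simpl; [ring|]. rewrite <- (Rplus_0_r (x * x ^ n)).
  replace (x * x^n + 0 - 1) with (x * (x^n - 1) + (x - 1)) by ring. rewrite IHn. ring. Qed.

Lemma U_cont n : continuity (U n).
Proof.
  induction n; simpl.
  - apply continuity_const. intros a b; reflexivity.
  - change (continuity ((fun _ => 1) + (fun x => x) * U n)%F).
    apply continuity_plus. apply continuity_const. intros a b; reflexivity.
    apply continuity_mult; auto. apply derivable_continuous, derivable_id.
Qed.

Lemma U_ge n x : 0 <= x -> 0 <= U n x /\ ((1 <= n)%nat -> 1 <= U n x).
Proof.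
  intros hx; induction n; simpl. split; [lra| intros; lia].
  destruct IHn as [h1 h2]. split; [nra| intros; nra].
Qed.

Lemma U_mono n x y : 0 <= x <= y -> U n x <= U n y.
Proof.
  intros hx; induction n; simpl. lra.
  pose proof (U_ge n x (proj1 hx)) as [h1 _].
  assert (y * U n x <= y * U n y) by (apply Rmult_le_compat_l; lra). nra.
Qed.

Lemma U_strict n x y : 0 <= x < y -> U (S (S n)) x < U (S (S n)) y.
Proof.
  intros hx. change (1 + x * U (S n) x < 1 + y * U (S n) y).
  pose proof (U_ge (S n) x (proj1 hx)) as [_ h1]. specialize (h1 ltac:(lia)).
  pose proof (U_mono (S n) x y ltac:(lra)).
  assert (y * U (S n) x <= y * U (S n) y) by (apply Rmult_le_compat_l; lra). nra.
Qed.

Lemma U_deriv_bound n r : 0 <= r < 1 -> INR (S (S n)) * r ^ (S n) < U (S (S n)) r.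
Proof.
  intros hr. induction n.
  - simpl. lra.
  - change (U (S (S (S n))) r) with (1 + r * U (S (S n)) r).
    assert (hp : r ^ S (S n) < 1). { apply pow_lt_1_compat; [lra|lia]. }
    assert (r * (INR (S (S n)) * r ^ S n) <= r * U (S (S n)) r) by (apply Rmult_le_compat_l; lra).
    rewrite S_INR. change (r ^ S (S n)) with (r * r ^ S n) in *. nra.
Qed.

Lemma U_at1 n : U n 1 = INR n.
Proof. induction n; simpl U; [simpl; ring|]. rewrite IHn, S_INR. ring. Qed.

Definition h (d : nat) (x : R) := x ^ d - 4 * x + 3.

Lemma h_U d x : h d x = (x - 1) * (U d x - 4).
Proof. unfold h. rewrite <- (Rplus_0_r (x^d)). replace (x^d + 0 - 4*x + 3) with ((x^d - 1) - 4 * (x - 1)) by ring.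
  rewrite U_pow. ring. Qed.

Lemma root_exists d : (4 < d)%nat ->
  exists r, 3/4 < r < 1 /\ h d r = 0 /\ U d r = 4 /\
   (forall x, 0 <= x < 1 -> 0 <= h d x -> x <= r) /\
   INR d * r ^ (d - 1) < 4.
Proof.
  intros hd.
  destruct (IVT (fun x => U d x - 4) 0 1) as [r [hr1 hr2]].
  - change (continuity (U d - (fun _ => 4))%F). apply continuity_minus; [apply U_cont|].
    apply continuity_const; intros a b; reflexivity.
  - lra.
  - destruct d as [|[|d']]; [lia|lia|]. simpl. lra.
  - rewrite U_at1. apply lt_INR in hd. simpl in hd. lra.
  - assert (hU : U d r = 4) by lra.
    assert (r <> 1). { intro e. subst. rewrite U_at1 in hU. apply lt_INR in hd. simpl in hd. lra. }
    assert (r <> 0). { intro e. subst. destruct d as [|[|d']]; [lia|lia|]. simpl in hU. lra. }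
    assert (hh : h d r = 0) by (rewrite h_U; rewrite hU; ring).
    exists r. repeat split.
    + unfold h in hh. assert (0 < r ^ d) by (apply pow_lt; lra). lra.
    + lra.
    + exact hh.
    + exact hU.
    + intros x hx hx0. destruct (Rle_lt_dec x r) as [|hlt]; auto.
      exfalso. rewrite h_U in hx0. destruct d as [|[|d']]; [lia|lia|].
      pose proof (U_strict d' r x ltac:(lra)). nra.
    + destruct d as [|[|d']]; [lia|lia|]. replace (S (S d') - 1)%nat with (S d') by lia.
      rewrite <- hU. apply U_deriv_bound. lra.
Qed.

Definition sumR (l : list R) := fold_right Rplus 0 l.
Lemma sumR_app l1 l2 : sumR (l1 ++ l2) = sumR l1 + sumR l2.
Proof. induction l1; simpl; [ring|]. unfold sumR in *; simpl; rewrite IHl1; ring. Qed.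
Lemma sumR_scale {A} c (F : A -> R) l : sumR (map (fun x => c * F x) l) = c * sumR (map F l).
Proof. induction l; unfold sumR in *; simpl; [ring|]. rewrite IHl; ring. Qed.
Lemma sumR_ext {A} (F G : A -> R) l : (forall x, F x = G x) -> sumR (map F l) = sumR (map G l).
Proof. intros H; induction l; unfold sumR in *; simpl; auto. rewrite H, IHl; auto. Qed.

Definition wsum (P : list bool -> bool) M :=
  sumR (map (fun l => if P l then weight l else 0) (all_seqs M)).

Lemma wsum_S P M : wsum P (S M) =
  1/4 * wsum (fun t => P (true :: t)) M + 3/4 * wsum (fun t => P (false :: t)) M.
Proof.
  unfold wsum. simpl all_seqs. rewrite map_app, sumR_app, !map_map.
  rewrite <- !sumR_scale. f_equal; apply sumR_ext; intros x; simpl weight;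
  destruct (P _); ring.
Qed.

Lemma wsum_0 P : wsum P 0 = if P [] then 1 else 0.
Proof. unfold wsum, sumR; simpl. destruct (P []); simpl; ring. Qed.

Lemma wsum_ext P Q M : (forall l, P l = Q l) -> wsum P M = wsum Q M.
Proof. intros H. unfold wsum. apply sumR_ext. intros x; rewrite H; auto. Qed.

Lemma wsum_true M : wsum (fun _ => true) M = 1.
Proof. induction M. rewrite wsum_0; auto. rewrite wsum_S, IHM. lra. Qed.

Lemma wsum_mono M : forall P Q, (forall l, P l = true -> Q l = true) -> wsum P M <= wsum Q M.
Proof.
  induction M; intros P Q H.
  - rewrite !wsum_0. destruct (P []) eqn:e. rewrite (H _ e); lra. destruct (Q []); lra.
  - rewrite !wsum_S. assert (h1 := IHM (fun t => P (true :: t)) (fun t => Q (true :: t)) (fun t => H _)).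
    assert (h2 := IHM (fun t => P (false :: t)) (fun t => Q (false :: t)) (fun t => H _)). lra.
Qed.

Fixpoint evr (d a : nat) (l : list bool) : bool :=
  match l with
  | [] => false
  | true :: t => evr d (a + d - 1) t
  | false :: t => match a with O => true | S a' => evr d a' t end
  end.

Lemma ps_cons b t N : partial_sum (b :: t) (S N) = ((if b then 1 else 0) + partial_sum t N)%nat.
Proof. unfold partial_sum. simpl firstn. destruct b; reflexivity. Qed.

Lemma existsb_ext {A} (f g : A -> bool) l : (forall x, f x = g x) -> existsb f l = existsb g l.
Proof. intros H; induction l; simpl; auto. rewrite H, IHl; auto. Qed.

Lemma existsb_mapS (f : nat -> bool) l : existsb f (map S l) = existsb (fun n => f (S n)) l.
Proof. induction l; simpl; auto. rewrite IHl; auto. Qed.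

Lemma ev_evr d (hd : (1 <= d)%nat) l : forall a,
  existsb (fun N => Nat.ltb (a + d * partial_sum l N) N) (seq 1 (length l)) = evr d a l.
Proof.
  induction l as [|b t IH]; intros a; [reflexivity|].
  simpl length. change (seq 1 (S (length t))) with (1%nat :: seq 2 (length t)).
  rewrite <- seq_shift. simpl existsb. rewrite existsb_mapS.
  rewrite ps_cons. unfold partial_sum at 1; simpl firstn.
  destruct b.
  - simpl evr. rewrite <- IH.
    replace (Nat.ltb _ 1) with false.
    2:{ symmetry. apply Nat.ltb_ge. simpl. lia. }
    simpl orb. apply existsb_ext. intros N. rewrite ps_cons.
    match goal with |- (?x <? ?y) = (?u <? ?v) => destruct (Nat.ltb_spec x y); destruct (Nat.ltb_spec u v) end; auto; lia.
  - destruct a as [|a'].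
    + simpl. rewrite Nat.mul_0_r. reflexivity.
    + simpl evr. rewrite <- IH.
      replace (Nat.ltb _ 1) with false.
      2:{ symmetry. apply Nat.ltb_ge. simpl. lia. }
      simpl orb. apply existsb_ext. intros N. rewrite ps_cons.
      match goal with |- (?x <? ?y) = (?u <? ?v) => destruct (Nat.ltb_spec x y); destruct (Nat.ltb_spec u v) end; auto; lia.
Qed.

Lemma event_evr d (hd : (1 <= d)%nat) l : event_upto d l = evr d 0 l.
Proof.
  rewrite <- ev_evr by exact hd. unfold event_upto. apply existsb_ext. intros N.
  assert (hd' : 0 < INR d) by (apply lt_0_INR; lia).
  destruct (Rlt_dec _ _) as [h|h]; destruct (Nat.ltb_spec (0 + d * partial_sum l N) N) as [h'|h']; auto.
  - exfalso. rewrite Nat.add_0_l in h'. apply le_INR in h'. rewrite mult_INR in h'. simpl in h'.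
    apply (Rmult_lt_compat_l (INR d)) in h; auto. unfold Rdiv in h.
    replace (INR d * (INR N * / INR d)) with (INR N) in h by (field; lra). lra.
  - exfalso. apply h. rewrite Nat.add_0_l in h'. apply lt_INR in h'. rewrite mult_INR in h'. simpl in h'.
    apply (Rmult_lt_reg_l (INR d)); auto. unfold Rdiv.
    replace (INR d * (INR N * / INR d)) with (INR N) by (field; lra). lra.
Qed.

Definition fP d a M := wsum (evr d a) M.

Lemma P_upto_f d (hd : (1 <= d)%nat) M : P_upto d M = fP d 0 M.
Proof. unfold fP. change (P_upto d M) with (wsum (event_upto d) M). apply wsum_ext. apply event_evr; auto. Qed.

Lemma f_0 d a : fP d a 0 = 0.
Proof. unfold fP. rewrite wsum_0. reflexivity. Qed.

Lemma f_S d a M : fP d a (S M) = 1/4 * fP d (a + d - 1) M +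
   3/4 * match a with O => 1 | S a' => fP d a' M end.
Proof.
  unfold fP. rewrite wsum_S. f_equal. f_equal. destruct a.
  - rewrite <- (wsum_true M). apply wsum_ext. reflexivity.
  - apply wsum_ext. reflexivity.
Qed.

Lemma f_bounds d M : forall a, 0 <= fP d a M <= 1.
Proof.
  induction M; intros a. rewrite f_0; lra.
  rewrite f_S. pose proof (IHM (a + d - 1)%nat). destruct a; [lra|]. pose proof (IHM a). lra.
Qed.

Lemma f_mono d M : forall a, fP d a M <= fP d a (S M).
Proof.
  induction M; intros a. rewrite f_0. apply f_bounds.
  rewrite (f_S d a (S M)), (f_S d a M). pose proof (IHM (a + d - 1)%nat). destruct a; [lra|]. pose proof (IHM a). lra.
Qed.

Lemma f_upper d r (hd : (1 <= d)%nat) (hr : 0 <= r) (hroot : r ^ d + 3 = 4 * r) :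
  forall M a, fP d a M <= r ^ (S a).
Proof.
  induction M; intros a. rewrite f_0. apply pow_le; lra.
  rewrite f_S. pose proof (IHM (a + d - 1)%nat) as h1.
  replace (S (a + d - 1)) with (a + d)%nat in h1 by lia. rewrite pow_add in h1.
  destruct a as [|a'].
  - simpl in h1 |- *. lra.
  - pose proof (IHM a') as h2.
    assert (e : r ^ S (S a') = r ^ S a' * r) by (simpl; ring).
    rewrite e. assert (r ^ S a' * r = 1/4 * (r ^ S a' * r ^ d) + 3/4 * r ^ S a') by nra. lra.
Qed.

Lemma f_lower d r rho phi (hd : (1 <= d)%nat) (hr : 0 <= r) (hrr : r <= rho)
  (hroot : r ^ d + 3 = 4 * r) (hphi0 : 0 <= phi) (hphi : rho ^ d + 3 = 4 * rho * phi) :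
  forall M a, r ^ (S a) - rho ^ (S a) * phi ^ M <= fP d a M.
Proof.
  induction M; intros a.
  - rewrite f_0. simpl pow at 3. assert (r ^ S a <= rho ^ S a) by (apply pow_incr; lra). lra.
  - rewrite f_S. pose proof (IHM (a + d - 1)%nat) as h1.
    replace (S (a + d - 1)) with (a + d)%nat in h1 by lia. rewrite !pow_add in h1.
    assert (hP : 0 <= phi ^ M) by (apply pow_le; lra).
    destruct a as [|a'].
    + simpl in h1 |- *.
      assert (rho * (phi * phi ^ M) = (rho ^ d + 3) / 4 * phi ^ M) by (rewrite hphi; field).
      lra.
    + pose proof (IHM a') as h2.
      set (X := r ^ S a') in *. set (Y := rho ^ S a') in *.
      assert (e1 : r ^ S (S a') = r * X) by reflexivity.
      assert (e2 : rho ^ S (S a') = rho * Y) by reflexivity.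
      rewrite e1, e2. change (phi ^ S M) with (phi * phi ^ M).
      assert (e3 : 1/4 * (X * r ^ d - Y * rho ^ d * phi ^ M) + 3/4 * (X - Y * phi ^ M)
                   = r * X - rho * Y * (phi * phi ^ M)).
      { replace (r ^ d) with (4 * r - 3) by lra. replace (rho ^ d) with (4 * rho * phi - 3) by lra. field. }
      lra.
Qed.

Lemma conv_gt4 d r (hd : (1 <= d)%nat) (hr : 0 < r < 1) (hroot : r ^ d + 3 = 4 * r)
  (hneg : forall x, r < x < 1 -> x ^ d - 4 * x + 3 < 0) :
  Un_cv (fun M => fP d 0 M) r.
Proof.
  set (rho := (r + 1) / 2). set (phi := (rho ^ d + 3) / (4 * rho)).
  assert (hrho : r < rho < 1) by (unfold rho; lra).
  pose proof (hneg rho hrho) as hn.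
  assert (hp0 : 0 < phi) by (unfold phi; apply Rdiv_lt_0_compat; [pose proof (pow_le rho d); lra| lra]).
  assert (hp1 : phi < 1).
  { unfold phi. apply (Rmult_lt_reg_r (4 * rho)); [lra|]. unfold Rdiv. rewrite Rmult_assoc, Rinv_l; lra. }
  assert (hph : rho ^ d + 3 = 4 * rho * phi) by (unfold phi; field; lra).
  intros eps heps.
  destruct (pow_lt_1_zero phi ltac:(rewrite Rabs_right; lra) (eps / rho) ltac:(apply Rdiv_lt_0_compat; lra)) as [N HN].
  exists N. intros n hn'. specialize (HN n hn').
  pose proof (f_upper d r hd ltac:(lra) hroot n 0) as hu.
  pose proof (f_lower d r rho phi hd ltac:(lra) ltac:(lra) hroot ltac:(lra) hph n 0) as hl.
  simpl pow in hu, hl. rewrite Rabs_right in HN by (apply Rle_ge, pow_le; lra).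
  assert (rho * phi ^ n < eps).
  { apply (Rmult_lt_compat_l rho) in HN; [|lra]. replace (rho * (eps / rho)) with eps in HN by (field; lra). exact HN. }
  unfold R_dist. apply Rabs_def1; lra.
Qed.

Lemma nat_unbounded c : exists n, c < INR n.
Proof.
  destruct (Rle_lt_dec c 0). exists 1%nat. simpl. lra.
  destruct (archimed c) as [h _]. exists (Z.to_nat (up c)).
  rewrite INR_IZR_INZ, Z2Nat.id. lra.
  apply le_IZR. lra.
Qed.

Lemma Rabs_le_inv a b : Rabs a <= b -> -b <= a <= b.
Proof. unfold Rabs; destruct (Rcase_abs a); lra. Qed.

Lemma pow3_ge n : INR n + 1 <= 3 ^ n.
Proof. induction n. simpl; lra. rewrite S_INR. simpl. pose proof (pos_INR n). lra. Qed.

Lemma alg (G : nat -> R) : G 0%nat = 0 -> (forall n, Rabs (G n) <= 1) ->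
  (forall n, G (S (S (S (S n)))) = 4 * G (S n) - 3 * G n) -> G 1%nat = 0.
Proof.
  intros h0 hb hr.
  set (E := fun n => G (S (S (S n))) + G (S (S n)) + G (S n) - 3 * G n).
  assert (hE : forall n, E n = E 0%nat).
  { induction n; auto. rewrite <- IHn. unfold E. rewrite hr. ring. }
  set (Sq := fun n => 3 * G n + 2 * G (S n) + G (S (S n))).
  assert (hS : forall n, Sq n = Sq 0%nat + INR n * E 0%nat).
  { induction n. simpl; ring. rewrite S_INR.
    assert (Sq (S n) = Sq n + E n) by (unfold Sq, E; ring). rewrite H, IHn, (hE n). ring. }
  assert (hSb : forall n, Rabs (Sq n) <= 6).
  { intros n. unfold Sq. pose proof (Rabs_le_inv _ _ (hb n)). pose proof (Rabs_le_inv _ _ (hb (S n))).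
    pose proof (Rabs_le_inv _ _ (hb (S (S n)))). apply Rabs_le. lra. }
  assert (hE0 : E 0%nat = 0).
  { destruct (Req_dec (E 0%nat) 0) as [|hne]; auto. exfalso.
    assert (hpos : 0 < Rabs (E 0%nat)) by (apply Rabs_pos_lt; auto).
    destruct (nat_unbounded (12 / Rabs (E 0%nat))) as [n hn].
    pose proof (hS n). pose proof (hSb n). pose proof (hSb 0%nat).
    assert (Rabs (INR n * E 0%nat) <= 12).
    { replace (INR n * E 0%nat) with (Sq n - Sq 0%nat) by lra.
      unfold Rminus. eapply Rle_trans; [apply Rabs_triang|]. rewrite Rabs_Ropp. lra. }
    rewrite Rabs_mult, (Rabs_right (INR n)) in H2 by (apply Rle_ge, pos_INR).
    apply (Rmult_lt_compat_r (Rabs (E 0%nat))) in hn; auto.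
    unfold Rdiv in hn. rewrite Rmult_assoc, Rinv_l in hn by lra. lra. }
  set (D := fun n => G (S n) - G n).
  set (N := fun n => D (S n) * D (S n) + 2 * D (S n) * D n + 3 * (D n * D n)).
  assert (hN : forall n, N n = 3 ^ n * N 0%nat).
  { induction n. simpl; ring.
    assert (e : D (S (S n)) = -2 * D (S n) - 3 * D n).
    { pose proof (hE n) as h. rewrite hE0 in h. unfold E in h. unfold D. lra. }
    assert (N (S n) = 3 * N n). { unfold N at 1. rewrite e. unfold N. ring. }
    rewrite H, IHn. simpl. ring. }
  assert (hDb : forall n, Rabs (D n) <= 2).
  { intros n. unfold D. unfold Rminus. eapply Rle_trans; [apply Rabs_triang|]. rewrite Rabs_Ropp.
    pose proof (hb n). pose proof (hb (S n)). lra. }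
  assert (hNb : forall n, N n <= 24).
  { intros n. unfold N. pose proof (hDb n) as a1. pose proof (hDb (S n)) as a2.
    apply Rabs_le_inv in a1. apply Rabs_le_inv in a2. nra. }
  assert (hN0 : N 0%nat = 0).
  { assert (0 <= N 0%nat) by (unfold N; nra).
    destruct (Rle_lt_dec (N 0%nat) 0) as [|hpos]; [lra|]. exfalso.
    destruct (nat_unbounded (24 / N 0%nat)) as [n hn].
    pose proof (hNb n). rewrite hN in H0. pose proof (pow3_ge n).
    apply (Rmult_lt_compat_r (N 0%nat)) in hn; auto.
    unfold Rdiv in hn. rewrite Rmult_assoc, Rinv_l in hn by lra. nra. }
  assert (D 0%nat = 0).
  { unfold N in hN0. assert (h1 : 0 <= (D 1%nat + D 0%nat) * (D 1%nat + D 0%nat)) by apply Rle_0_sqr.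
    assert (h2 : 0 <= D 0%nat * D 0%nat) by apply Rle_0_sqr.
    assert (h3 : D 0%nat * D 0%nat = 0) by lra.
    destruct (Rmult_integral _ _ h3); auto. }
  unfold D in H. lra.
Qed.

Lemma Un_cv_ext u v l : (forall n, u n = v n) -> Un_cv u l -> Un_cv v l.
Proof. intros H h eps he. destruct (h eps he) as [N HN]. exists N. intros n hn. rewrite <- H. auto. Qed.

Lemma Un_cv_const c : Un_cv (fun _ => c) c.
Proof. intros eps he. exists 0%nat. intros. unfold R_dist. rewrite Rminus_diag, Rabs_R0. lra. Qed.

Lemma Un_cv_le u l a b : Un_cv u l -> (forall n, a <= u n <= b) -> a <= l <= b.
Proof.
  intros h hb. split.
  - destruct (Rle_lt_dec a l); auto. destruct (h (a - l)) as [N HN]; [lra|].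
    specialize (HN N (le_n _)). specialize (hb N). unfold R_dist in HN.
    apply Rabs_def2 in HN. lra.
  - destruct (Rle_lt_dec l b); auto. destruct (h (l - b)) as [N HN]; [lra|].
    specialize (HN N (le_n _)). specialize (hb N). unfold R_dist in HN.
    apply Rabs_def2 in HN. lra.
Qed.

Lemma lim4_ex a : {l | Un_cv (fun M => fP 4 a M) l}.
Proof.
  apply growing_cv. intros n. apply f_mono.
  exists 1. intros x [i ->]. apply f_bounds.
Qed.

Definition L4 a := proj1_sig (lim4_ex a).
Lemma L4_cv a : Un_cv (fun M => fP 4 a M) (L4 a).
Proof. exact (proj2_sig (lim4_ex a)). Qed.

Lemma L4_rec a : L4 a = 1/4 * L4 (a + 3) + 3/4 * match a with O => 1 | S a' => L4 a' end.
Proof.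
  apply (UL_sequence (fun M => fP 4 a (S M))).
  - intros eps he. destruct (L4_cv a eps he) as [N HN]. exists N. intros n hn. apply HN. lia.
  - apply (Un_cv_ext (fun M => 1/4 * fP 4 (a+3) M + 3/4 * match a with O => 1 | S a' => fP 4 a' M end)).
    { intros n. rewrite f_S. replace (a + 4 - 1)%nat with (a + 3)%nat by lia. reflexivity. }
    apply CV_plus; apply CV_mult; try apply Un_cv_const.
    apply L4_cv. destruct a. apply Un_cv_const. apply L4_cv.
Qed.

Lemma conv_4 : Un_cv (fun M => fP 4 0 M) 1.
Proof.
  set (G := fun n => match n with O => 0 | S a => 1 - L4 a end).
  assert (hb : forall a, 0 <= L4 a <= 1) by (intros a; apply (Un_cv_le _ _ _ _ (L4_cv a)); intros; apply f_bounds).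
  assert (G 1%nat = 0).
  { apply alg. reflexivity.
    - intros [|n]; simpl. rewrite Rabs_R0; lra. pose proof (hb n). rewrite Rabs_right; lra.
    - intros [|n]; simpl G.
      + pose proof (L4_rec 0). simpl in H. lra.
      + pose proof (L4_rec (S n)). replace (S n + 3)%nat with (S (S (S (S n)))) in H by lia. lra. }
  simpl in H. assert (e : L4 0 = 1) by lra. rewrite <- e. apply L4_cv.
Qed.

Module CP.
Import Coquelicot.Coquelicot.

Lemma Cpow_eq z n : Defs.Cpow z n = Coquelicot.Complex.Cpow z n.
Proof. induction n; simpl; [reflexivity|]. rewrite IHn. reflexivity. Qed.

Lemma Cmod_Cpow z n : Cmod (Coquelicot.Complex.Cpow z n) = Cmod z ^ n.
Proof. induction n; simpl. apply Cmod_1. rewrite Cmod_mult, IHn. reflexivity. Qed.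

Lemma Cpow_R r n : Coquelicot.Complex.Cpow (RtoC r) n = RtoC (r ^ n).
Proof. induction n; simpl. reflexivity. rewrite IHn. unfold RtoC, Cmult; simpl. f_equal; ring. Qed.

Lemma Lip m (z w : C) rho : Cmod z <= rho -> Cmod w <= rho ->
  Cmod (Coquelicot.Complex.Cpow z (S m) - Coquelicot.Complex.Cpow w (S m))%C
   <= INR (S m) * rho ^ m * Cmod (z - w)%C.
Proof.
  intros hz hw. induction m.
  - simpl. replace (z * 1 - w * 1)%C with (z - w)%C by ring. lra.
  - replace (Coquelicot.Complex.Cpow z (S (S m)) - Coquelicot.Complex.Cpow w (S (S m)))%C
      with (z * (Coquelicot.Complex.Cpow z (S m) - Coquelicot.Complex.Cpow w (S m)) + (z - w) * Coquelicot.Complex.Cpow w (S m))%C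
      by (simpl; ring).
    eapply Rle_trans; [apply Cmod_triangle|]. rewrite !Cmod_mult, Cmod_Cpow.
    assert (h0 : 0 <= Cmod z) by apply Cmod_ge_0.
    assert (h1 : 0 <= Cmod w) by apply Cmod_ge_0.
    assert (h2 : 0 <= Cmod (z - w)%C) by apply Cmod_ge_0.
    assert (hp : Cmod w ^ S m <= rho ^ S m) by (apply pow_incr; lra).
    assert (Cmod z * Cmod (Coquelicot.Complex.Cpow z (S m) - Coquelicot.Complex.Cpow w (S m))%C
            <= rho * (INR (S m) * rho ^ m * Cmod (z - w)%C)).
    { apply Rmult_le_compat; auto. apply Cmod_ge_0. }
    assert (Cmod (z - w)%C * Cmod w ^ S m <= Cmod (z - w)%C * rho ^ S m) by (apply Rmult_le_compat_l; auto).
    rewrite (S_INR (S m)). simpl pow in *. nra.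
Qed.

Lemma Cmod_pair x y : Cmod (x, y) = sqrt (x * x + y * y).
Proof. unfold Cmod; simpl. f_equal; ring. Qed.

Lemma complex_part d r : (4 < d)%nat -> 0 < r < 1 -> r ^ d - 4 * r + 3 = 0 ->
   (forall x, 0 <= x < 1 -> 0 <= x ^ d - 4 * x + 3 -> x <= r) ->
   INR d * r ^ (d - 1) < 4 ->
   forall z : Cx, (Cnorm2 z < 1 /\ g d z = Cof 0) <-> z = Cof r.
Proof.
  intros hd hr hroot hle hder z. split.
  - intros [hn hg].
    assert (hm : Cmod z < 1).
    { destruct z as [x y]. rewrite Cmod_pair. rewrite <- sqrt_1. apply sqrt_lt_1_alt.
      unfold Cnorm2 in hn; simpl in hn. nra. }
    unfold g in hg. rewrite Cpow_eq in hg.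
    destruct (Coquelicot.Complex.Cpow z d) as [p1 p2] eqn:ep.
    destruct z as [x y]. unfold Cadd, Cmul, Cof in hg; simpl in hg.
    injection hg as hg1 hg2.
    assert (hmp : Cmod (x,y) ^ d = Cmod (p1, p2)) by (rewrite <- ep, Cmod_Cpow; reflexivity).
    assert (ht : 4 * Cmod (x, y) <= 3 + Cmod (x,y) ^ d).
    { replace (4 * Cmod (x,y)) with (Cmod ((p1, p2) + (3, 0))%C).
      - eapply Rle_trans; [apply Cmod_triangle|]. rewrite hmp.
        replace (Cmod (3,0)) with 3. lra. rewrite Cmod_pair.
        replace (3*3+0*0) with (3*3) by ring. rewrite sqrt_square; lra.
      - replace (4 * Cmod (x,y)) with (Cmod (4,0) * Cmod (x,y)).
        rewrite <- Cmod_mult. f_equal. unfold Cmult, Cplus; simpl. f_equal; lra.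
        f_equal. rewrite Cmod_pair. replace (4*4+0*0) with (4*4) by ring. rewrite sqrt_square; lra. }
    assert (hzr : Cmod (x,y) <= r).
    { apply hle. split; [apply Cmod_ge_0|exact hm]. lra. }
    assert (hrm : Cmod (RtoC r) <= r) by (rewrite Cmod_R, Rabs_right; lra).
    destruct d as [|m]; [lia|].
    pose proof (Lip m (x,y) (RtoC r) r hzr hrm) as hL.
    rewrite ep, Cpow_R in hL.
    replace ((p1, p2) - RtoC (r ^ S m))%C with (RtoC 4 * ((x,y) - RtoC r))%C in hL.
    2:{ unfold Cminus, Cplus, Copp, Cmult, RtoC; simpl. f_equal; try lra.
        simpl in hroot. lra. }
    rewrite Cmod_mult, Cmod_R, Rabs_right in hL by lra.
    replace (S m - 1)%nat with m in hder by lia.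
    assert (h0 : 0 <= Cmod ((x, y) - RtoC r)%C) by apply Cmod_ge_0.
    assert (hz : Cmod ((x, y) - RtoC r)%C = 0) by nra.
    apply Cmod_eq_0 in hz. unfold Cminus, Cplus, Copp, RtoC in hz; simpl in hz.
    injection hz as e1 e2. unfold Cof. f_equal; lra.
  - intros ->. split.
    + unfold Cnorm2, Cof; simpl. nra.
    + unfold g. rewrite Cpow_eq. change (Cof r) with (RtoC r). rewrite Cpow_R.
      unfold Cadd, Cmul, Cof, RtoC; simpl. f_equal; lra.
Qed.

End CP.

Theorem mainTheorem11 (d : nat) (hd : (1 <= d)%nat) :
  ((d <= 4)%nat -> P_d_is d 1) /\
  ((4 < d)%nat ->
     exists r : R,
       (forall z : Cx, (Cnorm2 z < 1 /\ g d z = Cof 0) <-> z = Cof r) /\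
       3/4 < r < 1 /\
       P_d_is d r).
Proof.
  split.
  - intros hd4. unfold P_d_is.
    assert (hcmp : forall M, fP 4 0 M <= fP d 0 M <= 1).
    { intros M. split; [|apply f_bounds]. unfold fP. apply wsum_mono. intros l hl.
      rewrite <- ev_evr in hl |- * by lia. apply existsb_exists in hl. apply existsb_exists.
      destruct hl as [N [hin hN]]. exists N. split; auto.
      apply Nat.ltb_lt in hN. apply Nat.ltb_lt. nia. }
    intros eps he. destruct (conv_4 eps he) as [N HN]. exists N. intros n hn.
    specialize (HN n hn). specialize (hcmp n). rewrite P_upto_f by exact hd.
    unfold R_dist in *. apply Rabs_def2 in HN. apply Rabs_def1; lra.
  - intros hd4. destruct (root_exists d hd4) as [r [hr [hh [hU [hle hder]]]]].
    unfold h in hh, hle.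
    exists r. split; [|split; [exact hr|]].
    + apply CP.complex_part; auto. lra.
    + unfold P_d_is. apply (Un_cv_ext (fun M => fP d 0 M)).
      { intros n. symmetry. apply P_upto_f; exact hd. }
      apply conv_gt4; auto. lra. lra.
      intros x hx. destruct (Rlt_le_dec (x ^ d - 4 * x + 3) 0) as [|hge]; auto.
      exfalso. pose proof (hle x ltac:(lra) hge). lra.
Qed.
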